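(* Let $K$ be an arbitrary field, $n\ge1$, and $m=\lfloor n/2\rfloor+1$. Then every $m\times m$ minor of the generic matrix $\Phi$ lies in the ideal of $A$ generated by $T_1,\dots,T_n$ and the entries of $\Phi^2$.
   Context: $A=K[\Phi_{a,b}:1\le a,b\le n]$ is the polynomial ring in the entries of the generic $n\times n$ matrix $\Phi$, and $T_i$ is the sum of all principal $i\times i$ minors of $\Phi$. *)

(* Defs.v *)
From HB Require Import structures.
From mathcomp Require Import all_boot all_order all_algebra.
From mathcomp Require Import mpoly.
Set Implicit Arguments. Unset Strict Implicit. Unset Printing Implicit Defensive.
Import GRing.Theory.
Local Open Scope ring_scope.

Definition polyA (K : fieldType) (n : nat) := {mpoly K[n * n]}.

Definition generic_mx (K : fieldType) (n : nat) : 'M[{mpoly K[n * n]}]_n :=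
  \matrix_(a < n, b < n) 'X_(mxvec_index a b).

(* strictly increasing maps 'I_k -> 'I_n, i.e. k-element subsets of 'I_n *)
Definition incr (k n : nat) (f : {ffun 'I_k -> 'I_n}) : bool :=
  [forall i : 'I_k, forall j : 'I_k, (i < j)%N ==> (f i < f j)%N].

Definition minor (R : comNzRingType) (n k : nat) (M : 'M[R]_n)
  (r c : {ffun 'I_k -> 'I_n}) : R := \det (mxsub r c M).

Definition Tsum (R : comNzRingType) (n : nat) (M : 'M[R]_n) (k : nat) : R :=
  \sum_(f : {ffun 'I_k -> 'I_n} | incr f) minor M f f.

Definition in_ideal (R : comNzRingType) (gens : seq R) (x : R) : Prop :=
  exists cs : seq R, size cs = size gens /\
    x = \sum_(i < size gens) cs`_i * gens`_i.

Definition lemma4_gens (K : fieldType) (n : nat) : seq {mpoly K[n * n]} :=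
  [seq Tsum (generic_mx K n) k.+1 | k <- iota 0 n] ++
  [seq (generic_mx K n *m generic_mx K n) ij.1 ij.2 | ij <- enum {: 'I_n * 'I_n}].
Arguments generic_mx K n : clear implicits.
Arguments lemma4_gens K n : clear implicits.

(* Main.v *)
Require Import Defs.
From HB Require Import structures.
From mathcomp Require Import all_boot all_order all_algebra.
From mathcomp Require Import mpoly.
From mathcomp Require Import fingroup perm generic_quotient ring_quotient.
From mathcomp Require Import ring zify.
From Stdlib Require Import Classical ClassicalEpsilon.
Set Implicit Arguments. Unset Strict Implicit. Unset Printing Implicit Defensive.
Import GRing.Theory.
Local Open Scope ring_scope.

Lemma jac (S : comNzRingType) k l (A C : 'M[S]_(k + l)) s :
  A *m C = s%:M -> \det A * \det (ulsubmx C) = s ^+ k * \det (drsubmx A).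
Proof.
move=> AC.
have : A *m C = block_mx s%:M 0 0 s%:M by rewrite AC -scalar_mx_block.
rewrite -[A in A *m C]submxK -[C in _ *m C]submxK mulmx_block.
case/eq_block_mx => h1 _ h3 _.
have E : A *m block_mx (ulsubmx C) 0 (dlsubmx C) 1%:M
   = block_mx (s%:M) (ursubmx A) 0 (drsubmx A).
  by rewrite -[A in LHS]submxK mulmx_block !mulmx0 !mulmx1 !add0r h1 h3.
have := congr1 determinant E.
by rewrite det_mulmx det_lblock det_ublock det1 mulr1 det_scalar.
Qed.

Lemma permext k l (f : 'I_k -> 'I_(k + l)) : injective f ->
  exists p : 'S_(k + l), forall i, p (lshift l i) = f i.
Proof.
move=> fi.
have E : l = #|[predC codom f]|.
  by move: (cardC (mem (codom f))); rewrite card_codom // !card_ord => /eqP; rewrite eqn_add2l => /eqP.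
pose g (j : 'I_l) : 'I_(k + l) := enum_val (cast_ord E j).
pose h (x : 'I_k + 'I_l) := match x with inl i => f i | inr j => g j end.
have hi : injective h.
  case=> [i|j] [i'|j'] //= e.
  - by rewrite (fi _ _ e).
  - have := enum_valP (cast_ord E j'); rewrite -/(g j') -e inE /= codom_f //.
  - have := enum_valP (cast_ord E j); rewrite -/(g j) e inE /= codom_f //.
  - by move/enum_val_inj/cast_ord_inj: e => ->.
have pi : injective (h \o split).
  by move=> x y /hi e; rewrite -(splitK x) -(splitK y) e.
exists (perm pi) => i; rewrite permE /=.
by rewrite -[lshift l i]/(unsplit (inl i)) unsplitK.
Qed.


Definition Bmx (S : nzRingType) n (g : 'I_n -> bool) (t : S) (M : 'M[S]_n) : 'M[S]_n :=
  \matrix_(i, j) if g i then M i j else t *+ (i == j).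

Lemma det_rcperm (S : comNzRingType) n (p : 'S_n) (B : 'M[S]_n) :
  \det (row_perm p (col_perm p B)) = \det B.
Proof.
rewrite row_permE col_permE !det_mulmx !det_perm odd_permV.
by rewrite [\det B * _]mulrC mulrA -signr_addb addbb expr0 mul1r.
Qed.

Lemma detB k l (f : 'I_k -> 'I_(k + l)) (S : comNzRingType) t (M : 'M[S]_(k + l)) :
  injective f ->
  \det (Bmx (fun i => i \in codom f) t M) = t ^+ l * \det (mxsub f f M).
Proof.
move=> fi; have [p hp] := permext fi.
rewrite -(det_rcperm p); set B' := row_perm _ _.
have nc : forall i, p (rshift k i) \in codom f = false.
  move=> i; apply/negbTE/negP => /codomP [x].
  by rewrite -hp => /perm_inj /eqP; rewrite eq_rlshift.
have e1 : ulsubmx B' = mxsub f f M.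
  by apply/matrixP => i j; rewrite !mxE !hp codom_f.
have e2 : dlsubmx B' = 0.
  by apply/matrixP => i j; rewrite !mxE nc (inj_eq perm_inj) eq_rlshift.
have e3 : drsubmx B' = t%:M.
  by apply/matrixP => i j; rewrite !mxE nc (inj_eq perm_inj) eq_rshift.
by rewrite -(submxK B') e1 e2 e3 det_ublock det_scalar mulrC.
Qed.


Lemma core' (R : comNzRingType) k l (N : 'M[R]_(k + l)) (r c : 'I_k -> 'I_(k + l)) :
  (l < k)%N -> N *m N = 0 -> char_poly N = 'X^(k + l) -> injective r -> injective c ->
  \det (mxsub r c N) = 0.
Proof.
move=> lk NN cp ri ci.
set N' := map_mx polyC N.
set A := 'X%:M - N'; set C := 'X%:M + N'.
have AC : A *m C = ('X^2)%:M.
  rewrite /A /C mulmxBl !mulmxDr [N' *m _]scalar_mxC -scalar_mxM -map_mxM NN map_mx0.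
  by rewrite addr0 addrK expr2.
have [p hp] := permext ri; have [q hq] := permext ci.
set A' := row_perm q (col_perm p A); set C' := row_perm p (col_perm q C).
have AC' : A' *m C' = ('X^2)%:M.
  apply/matrixP => i j; rewrite !mxE.
  transitivity ((A *m C) (q i) (q j)); last by rewrite AC mxE (inj_eq perm_inj).
  rewrite [RHS]mxE [RHS](reindex_inj (@perm_inj _ p)) /=; apply: eq_bigr => m _.
  by rewrite !mxE.
have J := @jac _ k l A' C' _ AC'.
have dA : \det A = 'X^(k + l) by rewrite -cp.
set D := \det (ulsubmx C') in J.
have D0 : D.[0] = \det (mxsub r c N).
  rewrite -horner_evalE -det_map_mx; congr (\det _); apply/matrixP => i j.
  by rewrite !mxE hp hq /= horner_evalE hornerD hornerMn hornerX hornerC mul0rn add0r.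
move: J; rewrite /A' row_permE col_permE !det_mulmx !det_perm odd_permV dA.
have sq (x : bool) : ((-1) ^+ x : {poly R}) * (-1) ^+ x = 1.
  by rewrite -signr_addb addbb.
move: (sq q) (sq p); move: ((-1) ^+ q) ((-1) ^+ p) (\det (drsubmx _)) => a b Y ha hb J.
have E : 'X^(k + l) * D = 'X^(k.*2) * (a * b * Y).
  rewrite -mul2n exprM mulrCA -J.
  transitivity ((a * a) * (b * b) * ('X^(k + l) * D)); first by rewrite ha hb !mul1r.
  ring.
have := congr1 (fun P : {poly R} => P`_(k + l)) E.
rewrite /= !coefXnM ltnn subnn ifT; last by rewrite -addnn ltn_add2l.
by rewrite -D0 horner_coef0.
Qed.


Definition ltord n : rel 'I_n := fun x y => (x < y)%N.

Lemma ltord_trans n : transitive (@ltord n).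
Proof. move=> x y z; exact: ltn_trans. Qed.

Lemma ltord_irr n : irreflexive (@ltord n).
Proof. move=> x; exact: ltnn. Qed.

Lemma sorted_enum_ord n : sorted (@ltord n) (enum 'I_n).
Proof. by have := iota_ltn_sorted 0 n; rewrite -val_enum_ord sorted_map. Qed.

Lemma sorted_enum_pred n (A : {pred 'I_n}) : sorted (@ltord n) (enum A).
Proof.
rewrite /enum_mem -enumT; apply: sorted_filter; first exact: ltord_trans.
exact: sorted_enum_ord.
Qed.

Lemma incr_inj k n (f : {ffun 'I_k -> 'I_n}) : incr f -> injective f.
Proof.
move=> /forallP fi i j e; apply/eqP; case: (ltngtP i j) => // h.
- by have := implyP (forallP (fi i) j) h; rewrite e ltnn.
- by have := implyP (forallP (fi j) i) h; rewrite e ltnn.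
- exact/eqP/val_inj.
Qed.

Lemma incr_sorted k n (f : {ffun 'I_k -> 'I_n}) : incr f -> sorted (@ltord n) (codom f).
Proof.
move=> /forallP fi; rewrite codomE.
have hh : {homo f : x y / ltord x y >-> ltord x y}.
  by move=> x y xy; exact: (implyP (forallP (fi x) y) xy).
exact: (homo_sorted hh _ (sorted_enum_ord k)).
Qed.

Definition himg k n (f : {ffun 'I_k -> 'I_n}) : {ffun 'I_n -> bool} :=
  [ffun i => i \in codom f].

Lemma codom_ffun_inj k n (f f' : {ffun 'I_k -> 'I_n}) : codom f = codom f' -> f = f'.
Proof.
move=> ec; have eg : fgraph f = fgraph f'.
  apply: val_inj; rewrite /= -!codom_ffun //.
apply/ffunP => i.
have h (g : {ffun 'I_k -> 'I_n}) : g i = tnth (fgraph g) (enum_rank i).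
  by rewrite (tnth_fgraph g (enum_rank i)) enum_rankK.
by rewrite (h f) (h f') eg.
Qed.

Lemma himg_inj k n : {in [set f : {ffun 'I_k -> 'I_n} | incr f] &, injective (@himg k n)}.
Proof.
move=> f f' hf hf' e.
have {}hf : incr f by move: hf; rewrite inE.
have {}hf' : incr f' by move: hf'; rewrite inE.
apply: codom_ffun_inj.
have s1 := incr_sorted hf; have s2 := incr_sorted hf'.
have m : codom f =i codom f'.
  move=> x; have := congr1 (fun g : {ffun 'I_n -> bool} => g x) e.
  by rewrite /himg !ffunE.
exact: (irr_sorted_eq (@ltord_trans n) (@ltord_irr n) s1 s2 m).
Qed.



Lemma himg_card k n (g : {ffun 'I_n -> bool}) :
  (g \in [set himg f | f in [set f : {ffun 'I_k -> 'I_n} | incr f]]) =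
  (#|[set i | g i]| == k).
Proof.
apply/imsetP/eqP.
  case=> f; rewrite inE => hf ->.
  have -> : [set i | himg f i] = [set i in codom f].
    by apply/setP => i; rewrite !inE ffunE.
  by rewrite cardsE card_codom ?card_ord //; exact: incr_inj.
move=> cg.
set s := enum [set i | g i].
have ss : size s == k by rewrite /s -cardE cg.
pose t := Tuple ss.
pose f := [ffun i => tnth t i].
have cf : codom f = s.
  rewrite codomE -[RHS](map_tnth_enum t).
  by apply: eq_map => i; rewrite ffunE.
exists f.
  rewrite inE; apply/forallP => i; apply/forallP => j; apply/implyP => ij.
  rewrite !ffunE (tnth_nth (tnth t i) t i) (tnth_nth (tnth t i) t j).
  apply: (sorted_ltn_nth (@ltord_trans n)) => //.
  - exact: sorted_enum_pred.
  - by rewrite inE (eqP ss).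
  - by rewrite inE (eqP ss).
apply/ffunP => i; rewrite ffunE cf /s mem_enum inE //.
Qed.


Lemma det_expand (S : comNzRingType) n t (M : 'M[S]_n) :
  \det (t%:M + M) = \sum_(g : {ffun 'I_n -> bool}) \det (Bmx g t M).
Proof.
have E (s : 'S_n) : \prod_i (t%:M + M) i (s i)
    = \sum_(g : {ffun 'I_n -> bool}) \prod_i (Bmx g t M) i (s i).
  have -> : \sum_(g : {ffun 'I_n -> bool}) \prod_i (Bmx g t M) i (s i)
      = \sum_(g : {ffun 'I_n -> bool}) \prod_i (fun i (b : bool) => if b then M i (s i) else t *+ (i == s i)) i (g i).
    by apply: eq_bigr => g _; apply: eq_bigr => i _; rewrite mxE.
  rewrite -(bigA_distr_bigA (fun i (b : bool) => if b then M i (s i) else t *+ (i == s i))).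
  by apply: eq_bigr => i _; rewrite big_bool !mxE /= addrC.
rewrite /determinant.
under eq_bigr => s _ do rewrite E mulr_sumr.
rewrite exchange_big; apply: eq_bigr => g _; done.
Qed.

Lemma detB' n k (f : 'I_k -> 'I_n) (S : comNzRingType) t (M : 'M[S]_n) :
  injective f ->
  \det (Bmx (fun i => i \in codom f) t M) = t ^+ (n - k) * \det (mxsub f f M).
Proof.
move=> fi; have kn : (k <= n)%N by have := leq_card _ fi; rewrite !card_ord.
move: f M fi; rewrite -(subnKC kn); move: (n - k)%N => l f M fi.
rewrite addKn; exact: detB.
Qed.

Lemma pme (S : comNzRingType) n t (M : 'M[S]_n) :
  \det (t%:M + M) = \sum_(k < n.+1) t ^+ (n - k) * Tsum M k.
Proof.
rewrite det_expand.
rewrite (partition_big (fun g : {ffun 'I_n -> bool} => inord #|[set i | g i]| : 'I_n.+1) xpredT) //=.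
apply: eq_bigr => k _.
rewrite (eq_bigl (fun g => g \in [set himg f | f in [set f : {ffun 'I_k -> 'I_n} | incr f]])); last first.
  move=> g; rewrite himg_card /= -val_eqE /= inordK //.
  by rewrite ltnS -[X in (_ <= X)%N](card_ord n) max_card.
rewrite big_imset /=; last exact: himg_inj.
rewrite /Tsum mulr_sumr; apply: eq_big => f; first by rewrite inE.
move=> hf.
have -> : Bmx (himg f) t M = Bmx (fun i => i \in codom f) t M.
  by apply/matrixP => i j; rewrite !mxE ffunE.
rewrite /minor detB' //; apply: incr_inj; by rewrite inE in hf.
Qed.


Lemma TsumN (S : comNzRingType) n (B : 'M[S]_n) k : Tsum (- B) k = (-1) ^+ k * Tsum B k.
Proof.
rewrite /Tsum mulr_sumr; apply: eq_bigr => f _; rewrite /minor.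
have -> : mxsub f f (- B) = - mxsub f f B by apply/matrixP => i j; rewrite !mxE.
by rewrite -scaleN1r detZ.
Qed.

Lemma Tsum_map (aR rR : comNzRingType) (phi : {rmorphism aR -> rR}) n (B : 'M[aR]_n) k :
  Tsum (map_mx phi B) k = phi (Tsum B k).
Proof.
rewrite /Tsum rmorph_sum; apply: eq_bigr => f _.
by rewrite /minor -map_mxsub det_map_mx.
Qed.

Lemma Tsum0 (S : comNzRingType) n (B : 'M[S]_n) : Tsum B 0 = 1.
Proof.
rewrite /Tsum (eq_bigl xpredT); last by move=> f; apply/forallP => -[].
rewrite (eq_bigr (fun=> 1)); last by move=> f _; rewrite /minor det_mx00.
by rewrite sumr_const card_ffun !card_ord expn0.
Qed.

Lemma cp_X (R : comNzRingType) n (N : 'M[R]_n) :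
  (forall i, (0 < i <= n)%N -> Tsum N i = 0) -> char_poly N = 'X^n.
Proof.
move=> hT; rewrite /char_poly /char_poly_mx pme big_ord_recl big1 ?addr0.
  by rewrite subn0 Tsum0 mulr1.
move=> i _; rewrite TsumN Tsum_map /= /bump /= hT ?rmorph0 ?mulr0 //.
by rewrite add1n ltnS ltn_ord.
Qed.

Lemma core (R : comNzRingType) n k (N : 'M[R]_n) (r c : 'I_k -> 'I_n) :
  (n < k.*2)%N -> N *m N = 0 -> char_poly N = 'X^n -> injective r -> injective c ->
  \det (mxsub r c N) = 0.
Proof.
move=> h NN cp ri ci.
have kn : (k <= n)%N by have := leq_card _ ri; rewrite !card_ord.
move: N r c NN cp ri ci h; rewrite -(subnKC kn); move: (n - k)%N => l N r c NN cp ri ci h.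
apply: core' => //.
by move: h; rewrite -addnn ltn_add2l.
Qed.

Local Open Scope quotient_scope.

Section IdealLemmas.
Variable R : comNzRingType.

Lemma in_ideal0 (gens : seq R) : in_ideal gens 0.
Proof.
exists (nseq (size gens) 0); rewrite size_nseq; split => //.
by rewrite big1 // => i _; rewrite nth_nseq if_same mul0r.
Qed.

Lemma in_idealD (gens : seq R) a u v :
  in_ideal gens u -> in_ideal gens v -> in_ideal gens (a * u + v).
Proof.
move=> [cu [su hu]] [cv [sv hv]].
exists (mkseq (fun i => a * cu`_i + cv`_i) (size gens)); rewrite size_mkseq; split => //.
rewrite hu hv mulr_sumr -big_split; apply: eq_bigr => i _.
by rewrite nth_mkseq // mulrDl mulrA.
Qed.

Lemma in_ideal_gen (gens : seq R) x : x \in gens -> in_ideal gens x.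
Proof.
move=> xg; have jlt : (index x gens < size gens)%N by rewrite index_mem.
exists (mkseq (fun i => (i == index x gens)%:R) (size gens)); rewrite size_mkseq; split => //.
rewrite (bigD1 (Ordinal jlt)) //= big1 ?addr0.
  by rewrite nth_mkseq // eqxx mul1r nth_index.
move=> i /eqP ne; rewrite nth_mkseq //; case: eqP => [e|]; last by rewrite mul0r.
by case: ne; apply: val_inj.
Qed.

End IdealLemmas.

Definition Ib (R : comNzRingType) (gens : seq R) : {pred R} :=
  fun x => if excluded_middle_informative (in_ideal gens x) then true else false.

Lemma IbE (R : comNzRingType) (gens : seq R) x : (x \in Ib gens) <-> in_ideal gens x.
Proof.
rewrite /Ib unfold_in /=; case: excluded_middle_informative => //.
Qed.

Lemma Ib_closed (R : comNzRingType) (gens : seq R) : ~ in_ideal gens 1 ->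
  idealr_closed (Ib gens).
Proof.
move=> h1; split.
- by apply/IbE; exact: in_ideal0.
- by apply/negP => /IbE.
- by move=> a u v /IbE hu /IbE hv; apply/IbE; exact: in_idealD.
Qed.

Theorem lemma4 (K : fieldType) (n : nat) (hn : (1 <= n)%N)
  (r c : {ffun 'I_(n./2.+1) -> 'I_n}) (hr : incr r) (hc : incr c) :
  in_ideal (lemma4_gens K n) (minor (generic_mx K n) r c).
Proof.
set gens := lemma4_gens K n.
case: (classic (in_ideal gens 1)) => h1.
  by have := in_idealD (minor (generic_mx K n) r c) h1 (in_ideal0 gens); rewrite mulr1 addr0.
pose I : idealr _ := HB.pack (Ib gens) (isIdealr.Build _ (Ib gens) (Ib_closed h1)).
pose Q := {ideal_quot I}.
have piE0 : forall x, \pi_Q x = 0 -> in_ideal gens x.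
  move=> x px; apply/IbE.
  have := Quotient.idealrBE I x 0; rewrite subr0 => ->.
  by rewrite px -(rmorph0 \pi_Q) /= eqxx.
have piG : forall x, x \in gens -> \pi_Q x = 0.
  move=> x xg; have xi : x \in I by apply/IbE; exact: in_ideal_gen.
  have : x == 0 %[mod Q] by rewrite -Quotient.idealrBE subr0.
  by move/eqP => ->; rewrite rmorph0.
apply: piE0.
have H : \det (mxsub r c (map_mx \pi_Q (generic_mx K n))) = 0.
  apply: core.
  - have := odd_double_half n; have := leq_b1 (odd n); rewrite doubleS; lia.
  - rewrite -map_mxM; apply/matrixP => i j; rewrite [RHS]mxE [LHS]mxE; apply: piG.
    rewrite mem_cat; apply/orP; right; apply/mapP; exists (i, j) => //.
    by rewrite mem_enum.
  - apply: cp_X => i hi; rewrite Tsum_map; apply: piG.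
    rewrite mem_cat; apply/orP; left; apply/mapP; exists i.-1.
      by rewrite mem_iota add0n; case/andP: hi => h0 h; rewrite (ltn_predK h0).
    by case/andP: hi => h0 _; rewrite (ltn_predK h0).
  - exact: incr_inj.
  - exact: incr_inj.
by move: H; rewrite -map_mxsub det_map_mx.
Qed.
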